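(* Let $f$ be an $(n-1)$-variable Boolean function and let $\bar f$ be the $n$-variable Boolean function $\bar f(x_1,\dots,x_n)=x_n+f(x_1,\dots,x_{n-1})$. Then $$\min({FAI}(f),{FAI}(1+f)+1)\le{FAI}(\bar f)\le\mathcal{FAI}(f)+2.$$
   Context: An $m$-variable Boolean function is a map $\mathbb{F}_2^m\to\mathbb{F}_2$, with algebraic degree $\deg$ the degree of its algebraic normal form. For $h$ an $m$-variable function, ${AN}^c(h)$ is the set of $g$ with $h\cdot g\neq0$, ${FAI}(h)$ is the minimum of $\deg(g)+\deg(h\cdot g)$ over $g\in{AN}^c(h)$, $g\neq 1$, and $\mathcal{FAI}(h)=\min({FAI}(h),{FAI}(1+h))$. *)

(* Defs.v *)
From mathcomp Require Import all_boot.
Set Implicit Arguments. Unset Strict Implicit. Unset Printing Implicit Defensive.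

Definition point (m : nat) := {ffun 'I_m -> bool}.
Definition BF (m : nat) := {ffun point m -> bool}.

(* Evaluation of the polynomial  sum_{S in A} prod_{i in S} x_i  over F_2,
   where A is a set of monomials (each monomial = set of variable indices). *)
Definition anf_eval (m : nat) (A : {set {set 'I_m}}) (x : point m) : bool :=
  odd #|[set S in A | [forall i in S, x i]]|.

Definition is_anf (m : nat) (f : BF m) (A : {set {set 'I_m}}) : bool :=
  [forall x, anf_eval A x == f x].

(* Algebraic degree: the degree of the ANF (max size of a monomial in it).
   Since the ANF exists and is unique, taking the minimum over all
   representations A gives exactly the degree of the ANF. *)
Definition bdeg (m : nat) (f : BF m) : nat :=
  \big[minn/m]_(A : {set {set 'I_m}} | is_anf f A) \max_(S in A) #|S|.

Definition bconst (m : nat) (b : bool) : BF m := [ffun _ => b].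
Definition bmul (m : nat) (h g : BF m) : BF m := [ffun x => h x && g x].
Definition bcompl (m : nat) (h : BF m) : BF m := [ffun x => ~~ h x].

(* FAI(h) = min { deg g + deg (h g) : h g <> 0, g <> 1 }.
   The default 2m+1 (above any attainable value) only matters when the set
   is empty, which never happens for nonconstant h. *)
Definition FAI (m : nat) (h : BF m) : nat :=
  \big[minn/(m.*2).+1]_(g : BF m | (bmul h g != bconst m false)
                                   && (g != bconst m true))
     (bdeg g + bdeg (bmul h g)).

Definition FAIc (m : nat) (h : BF m) : nat := minn (FAI h) (FAI (bcompl h)).

Definition fbar (m : nat) (f : BF m) : BF m.+1 :=
  [ffun x : point m.+1 =>
     xorb (x ord_max) (f [ffun i : 'I_m => x (widen_ord (leqnSn m) i)])].

(* Main.v *)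
Require Import Defs.
From mathcomp Require Import all_boot zify.

Set Implicit Arguments. Unset Strict Implicit. Unset Printing Implicit Defensive.

Section Aux.

Definition restr n (y : point n.+1) : point n := [ffun i => y (widen_ord (leqnSn n) i)].
Definition ext n (x : point n) (b : bool) : point n.+1 :=
  [ffun i : 'I_n.+1 => oapp x b (insub (val i) : option 'I_n)].

Lemma restr_ext n (x : point n) b : restr (ext x b) = x.
Proof. by apply/ffunP => i; rewrite !ffunE /= valK. Qed.

Lemma ext_max n (x : point n) b : ext x b ord_max = b.
Proof. by rewrite ffunE /= insubF // ltnn. Qed.

Lemma ext_restr n (y : point n.+1) : ext (restr y) (y ord_max) = y.
Proof.
apply/ffunP => i; rewrite !ffunE /=; case: insubP => [u _ ui|].
  by rewrite /= ffunE; congr (y _); apply: val_inj.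
rewrite -leqNgt => le; congr (y _); apply: val_inj => /=.
by apply/eqP; rewrite eqn_leq le -ltnS ltn_ord.
Qed.

Definition mon n (S : {set 'I_n}) (x : point n) := [forall i in S, x i].
Definition liftS n (S : {set 'I_n}) : {set 'I_n.+1} := widen_ord (leqnSn n) @: S.
Definition liftSm n (S : {set 'I_n}) : {set 'I_n.+1} := ord_max |: liftS S.
Definition unliftS n (T : {set 'I_n.+1}) : {set 'I_n} := [set i | widen_ord (leqnSn n) i \in T].

Lemma widen_inj n : injective (widen_ord (leqnSn n)).
Proof. by move=> i j /(congr1 val) /= /val_inj. Qed.

Lemma max_notin_liftS n (S : {set 'I_n}) : ord_max \notin liftS S.
Proof.
apply/imsetP => -[i _] /(congr1 val) /= ni.
by have := ltn_ord i; rewrite -ni ltnn.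
Qed.

Lemma unliftS_liftS n (S : {set 'I_n}) : unliftS (liftS S) = S.
Proof. by apply/setP => i; rewrite inE mem_imset //; apply: widen_inj. Qed.

Lemma unliftS_liftSm n (S : {set 'I_n}) : unliftS (liftSm S) = S.
Proof.
apply/setP => i; rewrite !inE mem_imset; last by apply: widen_inj.
suff -> : (widen_ord (leqnSn n) i == ord_max) = false by [].
by apply/eqP => /(congr1 val) /= ni; have := ltn_ord i; rewrite ni ltnn.
Qed.

Lemma widen_or_max n (i : 'I_n.+1) : i = ord_max \/ exists j, i = widen_ord (leqnSn n) j.
Proof.
case: (ltnP i n) => [lt|ge]; [right; exists (Ordinal lt) | left]; apply: val_inj => //=.
by apply/eqP; rewrite eqn_leq ge -ltnS ltn_ord.
Qed.

Lemma liftS_unliftS n (T : {set 'I_n.+1}) : ord_max \notin T -> liftS (unliftS T) = T.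
Proof.
move=> nT; apply/setP => i; apply/imsetP/idP => [[j]|iT].
  by rewrite inE => jT ->.
case: (widen_or_max i) => [e|[j e]]; first by move: iT; rewrite e (negbTE nT).
by exists j => //; rewrite inE -e.
Qed.

Lemma liftSm_unliftS n (T : {set 'I_n.+1}) : ord_max \in T -> liftSm (unliftS T) = T.
Proof.
move=> mT; apply/setP => i; rewrite /liftSm in_setU1; apply/orP/idP => [[/eqP ->//|/imsetP[j]]|iT].
  by rewrite inE => jT ->.
case: (widen_or_max i) => [e|[j e]]; first by left; rewrite e.
by right; apply/imsetP; exists j => //; rewrite inE -e.
Qed.

Lemma liftS_inj n : injective (@liftS n).
Proof. exact: can_inj (@unliftS_liftS n). Qed.
Lemma liftSm_inj n : injective (@liftSm n).
Proof. exact: can_inj (@unliftS_liftSm n). Qed.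

Lemma card_liftS n (S : {set 'I_n}) : #|liftS S| = #|S|.
Proof. by rewrite card_imset //; apply: widen_inj. Qed.
Lemma card_liftSm n (S : {set 'I_n}) : #|liftSm S| = #|S|.+1.
Proof. by rewrite cardsU1 max_notin_liftS card_liftS. Qed.

Lemma mon_liftS n (S : {set 'I_n}) y : mon (liftS S) y = mon S (restr y).
Proof.
apply/forallP/forallP => [H i|H i]; apply/implyP => iS.
  by rewrite ffunE; apply: (implyP (H _)); apply: imset_f.
by case/imsetP: iS => j jS ->; have := implyP (H j) jS; rewrite ffunE.
Qed.

Lemma mon_liftSm n (S : {set 'I_n}) y : mon (liftSm S) y = y ord_max && mon S (restr y).
Proof.
rewrite -mon_liftS; apply/forallP/andP => [H|[ym /forallP H] i].
  split; first by apply: (implyP (H _)); rewrite setU11.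
  by apply/forallP => i; apply/implyP => iS; apply: (implyP (H i)); rewrite setU1r.
by apply/implyP; rewrite in_setU1 => /orP[/eqP ->//|iS]; apply: (implyP (H i)).
Qed.


Definition xsum n (A : {set {set 'I_n}}) (x : point n) := \big[addb/false]_(S in A) mon S x.

Lemma evalE n (A : {set {set 'I_n}}) x : anf_eval A x = xsum A x.
Proof.
rewrite /anf_eval /xsum -sum1_card. rewrite [in RHS]big_mkcond [in LHS]big_mkcond /=.
apply: (@big_rec2 nat bool (fun n b => odd n = b)) => // S k b _ <-.
rewrite oddD inE /mon; case: (S \in A) => //=; by case: [forall i in S, x i].
Qed.

Lemma evalD n (A : {set {set 'I_n.+1}}) y :
  xsum A y = xsum [set S | liftS S \in A] (restr y) (+)
             (y ord_max && xsum [set S | liftSm S \in A] (restr y)).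
Proof.
rewrite /xsum (bigID (fun T : {set 'I_n.+1} => ord_max \in T)) /= addbC; congr (_ (+) _).
  rewrite (reindex_onto (@liftS n) (@unliftS n)) /=; last first.
    by move=> T /andP[_]; exact: liftS_unliftS.
  apply: eq_big => S; first by rewrite inE max_notin_liftS unliftS_liftS eqxx !andbT.
  by move=> _; rewrite mon_liftS.
rewrite (reindex_onto (@liftSm n) (@unliftS n)) /=; last first.
  by move=> T /andP[_]; exact: liftSm_unliftS.
transitivity (\big[addb/false]_(S in [set S | liftSm S \in A]) (y ord_max && mon S (restr y))).
  apply: eq_big => S; first by rewrite inE /liftSm setU11 unliftS_liftSm eqxx !andbT.
  by move=> _; rewrite mon_liftSm.
case: (y ord_max) => //=; by rewrite big1.
Qed.

Definition build n (B0 B1 : {set {set 'I_n}}) : {set {set 'I_n.+1}} :=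
  (@liftS n) @: B0 :|: (@liftSm n) @: B1.

Lemma build0 n (B0 B1 : {set {set 'I_n}}) : [set S | liftS S \in build B0 B1] = B0.
Proof.
apply/setP => S; rewrite !inE mem_imset; last exact: liftS_inj.
case: (S \in B0) => //=; apply/imsetP => -[T _ e].
by have := max_notin_liftS S; rewrite e /liftSm setU11.
Qed.

Lemma build1 n (B0 B1 : {set {set 'I_n}}) : [set S | liftSm S \in build B0 B1] = B1.
Proof.
apply/setP => S; rewrite !inE (mem_imset _ _ (@liftSm_inj n)) orbC.
case: (S \in B1) => //=; apply/imsetP => -[T _ e].
by have := max_notin_liftS T; rewrite -e /liftSm setU11.
Qed.

Definition deg n (A : {set {set 'I_n}}) := \max_(S in A) #|S|.

Lemma deg_build n (B0 B1 : {set {set 'I_n}}) : deg (build B0 B1) <= maxn (deg B0) (deg B1).+1.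
Proof.
apply/bigmax_leqP => T; rewrite inE => /orP[/imsetP[S SB ->]|/imsetP[S SB ->]].
  rewrite card_liftS leq_max; apply/orP; left; exact: leq_bigmax_cond.
rewrite card_liftSm leq_max; apply/orP; right; rewrite ltnS; exact: leq_bigmax_cond.
Qed.

Lemma deg0 n (A : {set {set 'I_n.+1}}) : deg [set S | liftS S \in A] <= deg A.
Proof.
apply/bigmax_leqP => S; rewrite inE => SA; rewrite -card_liftS; exact: leq_bigmax_cond.
Qed.

Lemma deg1 n (A : {set {set 'I_n.+1}}) S : S \in [set S | liftSm S \in A] -> #|S|.+1 <= deg A.
Proof. rewrite inE => SA; rewrite -card_liftSm; exact: leq_bigmax_cond. Qed.

Lemma is_anfP n (h : BF n) A : reflect (forall x, xsum A x = h x) (is_anf h A).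
Proof.
apply: (iffP forallP) => H x; first by rewrite -evalE; apply/eqP.
by rewrite evalE H.
Qed.

Lemma const_anf n b : is_anf (bconst n b) (if b then [set set0] else set0).
Proof.
apply/is_anfP => x; rewrite ffunE /xsum; case: b; last by rewrite big_set0.
by rewrite big_set1; apply/forallP => i; rewrite inE.
Qed.

Lemma build_anf n (H : BF n.+1) h0 h1 B0 B1 :
  is_anf h0 B0 -> is_anf h1 B1 ->
  (forall y, H y = h0 (restr y) (+) (y ord_max && h1 (restr y))) ->
  is_anf H (build B0 B1).
Proof.
move=> /is_anfP E0 /is_anfP E1 EH; apply/is_anfP => y.
by rewrite evalD build0 build1 E0 E1 EH.
Qed.

Lemma decomp n (H : BF n.+1) y :
  H y = H (ext (restr y) false) (+) (y ord_max && (H (ext (restr y) false) (+) H (ext (restr y) true))).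
Proof.
have := ext_restr y; move: (restr y) (y ord_max) => r b <-.
by case: b => /=; rewrite ?addbF ?addKb.
Qed.

Lemma anf_exists n (h : BF n) : exists A, is_anf h A.
Proof.
elim: n h => [|n IH] h.
  exists (if h [ffun i => false] then [set set0] else set0).
  have := const_anf 0 (h [ffun i => false]); move/is_anfP => E.
  apply/is_anfP => x; rewrite E ffunE; by congr (h _); apply/ffunP => -[].
have [B0 HB0] := IH [ffun x => h (ext x false)].
have [B1 HB1] := IH [ffun x => h (ext x false) (+) h (ext x true)].
exists (build B0 B1); apply: build_anf HB0 HB1 _ => y.
by rewrite !ffunE -decomp.
Qed.


Lemma bigmin_le (I : finType) (P : pred I) (F : I -> nat) d i :
  P i -> \big[minn/d]_(j | P j) F j <= F i.
Proof.
move=> Pi; rewrite -big_filter.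
have : i \in [seq j <- index_enum I | P j] by rewrite mem_filter Pi mem_index_enum.
elim: [seq j <- index_enum I | P j] => [//|j r IH]; rewrite inE big_cons /=.
case/orP => [/eqP <-|/IH le]; first exact: geq_minl.
by rewrite geq_min le orbT.
Qed.

Lemma bdeg_le n (h : BF n) A : is_anf h A -> bdeg h <= deg A.
Proof. by move=> HA; rewrite /bdeg; apply: bigmin_le. Qed.

Lemma bdeg_rep n (h : BF n) : exists A, is_anf h A /\ deg A <= bdeg h.
Proof.
rewrite /bdeg; apply: (big_ind (fun v => exists A, is_anf h A /\ deg A <= v)).
- have [A HA] := anf_exists h; exists A; split => //.
  by apply/bigmax_leqP => S _; have := max_card S; rewrite card_ord.
- move=> u v [A [HA dA]] [B [HB dB]]; case: (leqP u v) => uv.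
    by exists A; split => //; lia.
  by exists B; split => //; lia.
- by move=> A HA; exists A.
Qed.

Lemma bdeg_R0 n (H : BF n.+1) (h0 : BF n) :
  (forall x, h0 x = H (ext x false)) -> bdeg h0 <= bdeg H.
Proof.
move=> E; have [A [/is_anfP HA dA]] := bdeg_rep H.
apply: leq_trans (bdeg_le (A := [set S | liftS S \in A]) _) _.
  apply/is_anfP => x; have := evalD A (ext x false).
  by rewrite restr_ext ext_max addbF E HA => ->.
exact: leq_trans (deg0 A) dA.
Qed.

Lemma bdeg_D n (H : BF n.+1) (h1 : BF n) :
  (forall x, h1 x = H (ext x false) (+) H (ext x true)) -> (exists x, h1 x) ->
  (bdeg h1).+1 <= bdeg H.
Proof.
move=> E [x0 hx0]; have [A [/is_anfP HA dA]] := bdeg_rep H.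
set A1 := [set S | liftSm S \in A].
have R1 : forall x, xsum A1 x = h1 x.
  move=> x; have := evalD A (ext x true); have := evalD A (ext x false).
  rewrite !restr_ext !ext_max /= addbF !HA E => -> ->.
  by rewrite addKb.
have [S SA1] : exists S, S \in A1.
  apply/existsP; apply: contraLR hx0; rewrite negb_exists => /forallP N.
  by rewrite -R1 /xsum big1 // => S SA; have := N S; rewrite SA.
have pos := deg1 SA1.
have : deg A1 <= (deg A).-1.
  by apply/bigmax_leqP => T TA; have := deg1 TA; lia.
have HA1 : is_anf h1 A1 by apply/is_anfP.
have := bdeg_le HA1; lia.
Qed.

Lemma bdeg_U n (H : BF n.+1) (h0 h1 : BF n) :
  (forall y, H y = h0 (restr y) (+) (y ord_max && h1 (restr y))) ->
  bdeg H <= maxn (bdeg h0) (bdeg h1).+1.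
Proof.
move=> E; have [B0 [HB0 d0]] := bdeg_rep h0; have [B1 [HB1 d1]] := bdeg_rep h1.
have := bdeg_le (build_anf HB0 HB1 E); have := deg_build B0 B1; lia.
Qed.

Definition symd n (A B : {set {set 'I_n}}) := (A :\: B) :|: (B :\: A).

Lemma bdeg_sum n (H h1 h2 : BF n) :
  (forall x, H x = h1 x (+) h2 x) -> bdeg H <= maxn (bdeg h1) (bdeg h2).
Proof.
move=> E; have [A [/is_anfP HA dA]] := bdeg_rep h1; have [B [/is_anfP HB dB]] := bdeg_rep h2.
have R : is_anf H (symd A B).
  apply/is_anfP => x; rewrite E -HA -HB /xsum !(big_mkcond (fun S => S \in _)) -big_split /=.
  apply: eq_bigr => S _; rewrite !inE.
  by case: (S \in A); case: (S \in B); case: (mon S x).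
have : deg (symd A B) <= maxn (deg A) (deg B).
  apply/bigmax_leqP => S; rewrite !inE => /orP[/andP[_ SA]|/andP[_ SB]].
    by rewrite leq_max (leq_bigmax_cond _ SA).
  by rewrite leq_max (leq_bigmax_cond _ SB) orbT.
have := bdeg_le R; lia.
Qed.

Lemma bdeg_const n b : bdeg (bconst n b) = 0.
Proof.
apply/eqP; rewrite -leqn0; apply: leq_trans (bdeg_le (const_anf n b)) _.
by case: b; rewrite /deg ?big_set0 ?big_set1 ?cards0.
Qed.

Lemma bdeg_compl n (h : BF n) : bdeg (bcompl h) = bdeg h.
Proof.
have le : forall g : BF n, bdeg (bcompl g) <= bdeg g.
  move=> g; have := @bdeg_sum n (bcompl g) g (bconst n true).
  rewrite bdeg_const maxn0; apply => x; by rewrite !ffunE addbT.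
apply/eqP; rewrite eqn_leq le /=.
have -> : h = bcompl (bcompl h) by apply/ffunP => x; rewrite !ffunE negbK.
by rewrite {2}(_ : bcompl (bcompl h) = h) ?le //; apply/ffunP => x; rewrite !ffunE negbK.
Qed.

Lemma bdeg_R1 n (H : BF n.+1) (h : BF n) :
  (forall x, h x = H (ext x true)) -> bdeg h <= bdeg H.
Proof.
move=> E.
have e0 := @bdeg_R0 n H [ffun x => H (ext x false)] (fun x => ffunE _ _).
have : bdeg h <= maxn (bdeg [ffun x => H (ext x false)]) (bdeg [ffun x => H (ext x false) (+) H (ext x true)]).
  by apply: bdeg_sum => x; rewrite !ffunE E addKb.
case: (boolP [exists x, H (ext x false) (+) H (ext x true)]) => [/existsP[x hx]|].
  have := @bdeg_D n H [ffun x => H (ext x false) (+) H (ext x true)] (fun x => ffunE _ _).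
  have ex : exists x, [ffun x => H (ext x false) (+) H (ext x true)] x by exists x; rewrite ffunE.
  move/(_ ex); lia.
rewrite negb_exists => /forallP N.
have -> : [ffun x => H (ext x false) (+) H (ext x true)] = bconst n false.
  by apply/ffunP => x; rewrite !ffunE; apply/negbTE.
rewrite bdeg_const; lia.
Qed.

Lemma bdeg_max n (h : BF n) : bdeg h <= n.
Proof.
have [A HA] := anf_exists h; apply: leq_trans (bdeg_le HA) _.
by apply/bigmax_leqP => S _; have := max_card S; rewrite card_ord.
Qed.


Lemma neq0P n (h : BF n) : reflect (exists x, h x) (h != bconst n false).
Proof.
apply: (iffP idP) => [ne|[x hx]]; last by apply/eqP => E; move: hx; rewrite E ffunE.
case: (boolP [exists x, h x]) => [/existsP//|]; rewrite negb_exists => /forallP N.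
by move: ne; rewrite (_ : h = bconst n false) ?eqxx //; apply/ffunP => x; rewrite ffunE; apply/negbTE.
Qed.

Lemma neq1P n (h : BF n) : reflect (exists x, ~~ h x) (h != bconst n true).
Proof.
apply: (iffP idP) => [ne|[x hx]]; last by apply/eqP => E; move: hx; rewrite E ffunE.
case: (boolP [exists x, ~~ h x]) => [/existsP//|]; rewrite negb_exists => /forallP N.
by move: ne; rewrite (_ : h = bconst n true) ?eqxx //; apply/ffunP => x; rewrite ffunE; apply/negPn.
Qed.

Lemma decompP n (H : BF n.+1) (h0 h1 : BF n) :
  (forall x, H (ext x false) = h0 x) -> (forall x, H (ext x true) = h0 x (+) h1 x) ->
  forall y, H y = h0 (restr y) (+) (y ord_max && h1 (restr y)).
Proof.
move=> E0 E1 y; have := ext_restr y; move: (restr y) (y ord_max) => r c <-.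
by case: c => /=; rewrite ?E0 ?E1 ?addbF.
Qed.

Lemma FAI_le n (h g : BF n) : bmul h g != bconst n false -> g != bconst n true ->
  FAI h <= bdeg g + bdeg (bmul h g).
Proof. by move=> H1 H2; rewrite /FAI; apply: bigmin_le; rewrite H1 H2. Qed.

Lemma FAI_ge n (h : BF n) c : c <= (n.*2).+1 ->
  (forall g, bmul h g != bconst n false -> g != bconst n true -> c <= bdeg g + bdeg (bmul h g)) ->
  c <= FAI h.
Proof.
move=> Hd Hg; rewrite /FAI; apply: (big_ind (fun v => c <= v)) => //.
  by move=> u v; lia.
by move=> g /andP[]; apply: Hg.
Qed.

Lemma FAI_max n (h : BF n) : FAI h <= (n.*2).+1.
Proof.
rewrite /FAI; apply: (big_ind (fun v => v <= (n.*2).+1)) => //.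
  by move=> u v; lia.
by move=> g _; have := bdeg_max g; have := bdeg_max (bmul h g); lia.
Qed.

Lemma FAI_deg2 n (f : BF n.+1) : (exists x, f x) -> FAI f <= (bdeg f).+2.
Proof.
move=> [x0 fx0]; set b := x0 ord_max.
set g : BF n.+1 := [ffun y : point n.+1 => y ord_max == b].
have fg0 : bmul f g != bconst n.+1 false.
  by apply/neq0P; exists x0; rewrite !ffunE fx0 eqxx.
have g1 : g != bconst n.+1 true.
  apply/neq1P; exists (ext (restr x0) (~~ b)); rewrite ffunE ext_max; by case: (b).
apply: leq_trans (FAI_le fg0 g1) _.
have dg : bdeg g <= 1.
  have := @bdeg_U n g (bconst n (~~ b)) (bconst n true).
  rewrite !bdeg_const; apply; apply: decompP => x; rewrite /g ffunE ext_max !ffunE; by case: (b).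
suff : bdeg (bmul f g) <= (bdeg f).+1 by lia.
case Eb : (b).
  have := @bdeg_U n (bmul f g) (bconst n false) [ffun x => f (ext x true)].
  rewrite bdeg_const; have := @bdeg_R1 n f [ffun x => f (ext x true)] (fun x => ffunE _ _).
  move=> h1 h2; apply: leq_trans (h2 _) _; last by lia.
  by apply: decompP => x; rewrite ffunE /g [X in _ && X]ffunE ext_max !ffunE Eb ?andbF ?andbT.
have := @bdeg_U n (bmul f g) [ffun x => f (ext x false)] [ffun x => f (ext x false)].
have := @bdeg_R0 n f [ffun x => f (ext x false)] (fun x => ffunE _ _).
move=> h1 h2; apply: leq_trans (h2 _) _; last by lia.
by apply: decompP => x; rewrite ffunE /g [X in _ && X]ffunE ext_max !ffunE Eb ?andbF ?andbT ?addbb.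
Qed.

Lemma fbarE n (f : BF n) y : fbar f y = y ord_max (+) f (restr y).
Proof. by rewrite ffunE; case: (y ord_max). Qed.


Lemma bmulE n (h g : BF n) x : bmul h g x = h x && g x.
Proof. by rewrite ffunE. Qed.
Lemma bcomplE n (h : BF n) x : bcompl h x = ~~ h x.
Proof. by rewrite ffunE. Qed.

Definition Gdn n (g : BF n) : BF n.+1 := [ffun y => g (restr y) && ~~ y ord_max].
Definition Gup n (g : BF n) : BF n.+1 := [ffun y => g (restr y) && y ord_max].
Lemma GdnE n (g : BF n) y : Gdn g y = g (restr y) && ~~ y ord_max.
Proof. by rewrite ffunE. Qed.
Lemma GupE n (g : BF n) y : Gup g y = g (restr y) && y ord_max.
Proof. by rewrite ffunE. Qed.

Definition pt0 n : point n := [ffun => false].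

Lemma up1 n (f : BF n) : FAI (fbar f) <= (FAI f).+2.
Proof.
rewrite {2}/FAI; apply: (big_ind (fun v => FAI (fbar f) <= v.+2)).
- by have := FAI_max (fbar f); rewrite doubleS.
- by move=> u v; lia.
move=> g /andP[fg g1].
have G1 : Gdn g != bconst n.+1 true.
  by apply/neq1P; exists (ext (pt0 n) true); rewrite GdnE ext_max andbF.
have FG0 : bmul (fbar f) (Gdn g) != bconst n.+1 false.
  move/neq0P: fg => [x]; rewrite bmulE => /andP[fx gx]; apply/neq0P; exists (ext x false).
  by rewrite bmulE fbarE GdnE restr_ext ext_max fx gx.
apply: leq_trans (FAI_le FG0 G1) _.
have dG : bdeg (Gdn g) <= (bdeg g).+1.
  have := @bdeg_U n (Gdn g) g g => h; apply: leq_trans (h _) _; last by lia.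
  apply: decompP => x; by rewrite GdnE restr_ext ext_max ?andbT ?andbF ?addbb.
have dFG : bdeg (bmul (fbar f) (Gdn g)) <= (bdeg (bmul f g)).+1.
  have := @bdeg_U n (bmul (fbar f) (Gdn g)) (bmul f g) (bmul f g).
  move=> h; apply: leq_trans (h _) _; last by lia.
  apply: decompP => x; by rewrite !bmulE fbarE GdnE restr_ext ext_max ?andbT ?andbF ?addbb.
lia.
Qed.

Lemma up2 n (f : BF n) : FAI (fbar f) <= (FAI (bcompl f)).+2.
Proof.
rewrite {2}/FAI; apply: (big_ind (fun v => FAI (fbar f) <= v.+2)).
- by have := FAI_max (fbar f); rewrite doubleS.
- by move=> u v; lia.
move=> g /andP[fg g1].
have G1 : Gup g != bconst n.+1 true.
  by apply/neq1P; exists (ext (pt0 n) false); rewrite GupE ext_max andbF.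
have FG0 : bmul (fbar f) (Gup g) != bconst n.+1 false.
  move/neq0P: fg => [x]; rewrite bmulE bcomplE => /andP[fx gx]; apply/neq0P; exists (ext x true).
  by rewrite bmulE fbarE GupE restr_ext ext_max gx; move: fx; case: (f x).
apply: leq_trans (FAI_le FG0 G1) _.
have dG : bdeg (Gup g) <= (bdeg g).+1.
  have := @bdeg_U n (Gup g) (bconst n false) g; rewrite bdeg_const => h.
  apply: leq_trans (h _) _; last by lia.
  apply: decompP => x; by rewrite GupE restr_ext ext_max ffunE ?andbT ?andbF.
have dFG : bdeg (bmul (fbar f) (Gup g)) <= (bdeg (bmul (bcompl f) g)).+1.
  have := @bdeg_U n (bmul (fbar f) (Gup g)) (bconst n false) (bmul (bcompl f) g).
  rewrite bdeg_const => h; apply: leq_trans (h _) _; last by lia.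
  apply: decompP => x; rewrite !bmulE fbarE GupE restr_ext ext_max ffunE ?andbT ?andbF //.
  by rewrite bcomplE; case: (f x).
lia.
Qed.

End Aux.

Theorem corollary2 (m : nat) (f : BF m) :
  (exists x y, f x != f y) ->
  minn (FAI f) (FAI (bcompl f)).+1 <= FAI (fbar f) <= (FAIc f).+2.
Proof.
case: m f => [|m] f [x [y nxy]].
  by move: nxy; rewrite (_ : x = y) ?eqxx //; apply/ffunP => -[].
have f0 : exists x, f x.
  by case Ex: (f x); [exists x | exists y; move: nxy; rewrite Ex; case: (f y)].
have f1 : exists x, ~~ f x.
  by case Ex: (f x); [exists y; move: nxy; rewrite Ex; case: (f y) | exists x; rewrite Ex].
apply/andP; split; last first.
  by rewrite /FAIc; have := up1 f; have := up2 f; lia.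
have Fd := FAI_deg2 f0.
apply: FAI_ge.
  by have := bdeg_max f; rewrite !doubleS -!addnn; lia.
move=> G FG0 G1.
set FG := bmul (fbar f) G.
set a : BF m.+1 := [ffun x => G (ext x false)].
set b : BF m.+1 := [ffun x => G (ext x true)].
have Ga : forall x, a x = G (ext x false) by move=> z; rewrite ffunE.
have Gb : forall x, b x = G (ext x true) by move=> z; rewrite ffunE.
have FGa : forall x, FG (ext x false) = f x && a x.
  by move=> z; rewrite bmulE fbarE restr_ext ext_max Ga.
have FGb : forall x, FG (ext x true) = ~~ f x && b x.
  by move=> z; rewrite bmulE fbarE restr_ext ext_max Gb.
have dGa : bdeg a <= bdeg G by apply: bdeg_R0.
have dGb : bdeg b <= bdeg G by apply: bdeg_R1.
have Gne1 : (exists x, ~~ a x) \/ (exists x, ~~ b x).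
  move/neq1P: G1 => [z]; rewrite -(ext_restr z); case: (z ord_max) => nz.
    by right; exists (restr z); rewrite Gb.
  by left; exists (restr z); rewrite Ga.
have FGne0 : (exists x, f x && a x) \/ (exists x, ~~ f x && b x).
  move/neq0P: FG0 => [z]; rewrite -/FG -(ext_restr z); case: (z ord_max) => nz.
    by right; exists (restr z); rewrite -FGb.
  by left; exists (restr z); rewrite -FGa.
case: (boolP [exists x, f x && a x]) => [/existsP[x0 fa0]|]; last first.
  rewrite negb_exists => /forallP NA.
  have [x0 h0] : exists x, ~~ f x && b x.
    by case: FGne0 => // -[z]; rewrite (negbTE (NA z)).
  case: (boolP [exists x, ~~ b x]) => [/existsP[x1 nb1]|]; last first.
    rewrite negb_exists => /forallP Ball.
    have [x1 na1] : exists x, ~~ a x.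
      by case: Gne1 => // -[z]; rewrite (negbNE (Ball z)).
    have dGD : (bdeg (bcompl a)).+1 <= bdeg G.
      apply: bdeg_D => [z|]; first by rewrite bcomplE -Ga -Gb (negbNE (Ball z)) addbT.
      by exists x1; rewrite bcomplE.
    have dFD : (bdeg (bcompl f)).+1 <= bdeg FG.
      apply: bdeg_D => [z|]; first by rewrite bcomplE FGa FGb (negbTE (NA z)) (negbNE (Ball z)) andbT.
      by case: f1 => z hz; exists z; rewrite bcomplE.
    rewrite !bdeg_compl in dGD dFD.
    case: (boolP [exists x, a x]) => [/existsP[x3 a3]|_]; last by lia.
    have h1 : bmul f (bcompl a) != bconst m.+1 false.
      case: f0 => z fz; apply/neq0P; exists z; rewrite bmulE bcomplE fz /=.
      by have := NA z; rewrite fz.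
    have h2 : bcompl a != bconst m.+1 true by apply/neq1P; exists x3; rewrite bcomplE negbK.
    have eq : bmul f (bcompl a) = f.
      apply/ffunP => z; rewrite bmulE bcomplE; have := NA z.
      by case: (f z); case: (a z).
    by have := FAI_le h1 h2; rewrite eq bdeg_compl; lia.
  have h1 : bmul (bcompl f) b != bconst m.+1 false.
    by apply/neq0P; exists x0; rewrite bmulE bcomplE.
  have h2 : b != bconst m.+1 true by apply/neq1P; exists x1.
  have dF : (bdeg (bmul (bcompl f) b)).+1 <= bdeg FG.
    apply: bdeg_D => [z|]; first by rewrite bmulE bcomplE FGa FGb (negbTE (NA z)).
    by exists x0; rewrite bmulE bcomplE.
  by have := FAI_le h1 h2; lia.
case: (boolP [exists x, ~~ a x]) => [/existsP[x1 na1]|]; last first.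
  rewrite negb_exists => /forallP Aall.
  have [x1 nb1] : exists x, ~~ b x.
    by case: Gne1 => // -[z]; rewrite (negbNE (Aall z)).
  have dGD : (bdeg (bcompl b)).+1 <= bdeg G.
    apply: bdeg_D => [z|]; first by rewrite bcomplE -Ga -Gb (negbNE (Aall z)).
    by exists x1; rewrite bcomplE.
  rewrite bdeg_compl in dGD.
  case: (boolP [exists x, ~~ f x && b x]) => [/existsP[x2 h2']|]; last first.
    rewrite negb_exists => /forallP NB.
    have dFD : (bdeg f).+1 <= bdeg FG.
      apply: bdeg_D => [z|//]; rewrite FGa FGb (negbNE (Aall z)).
      by have := NB z; case: (f z); case: (b z).
    case: (boolP [exists x, b x]) => [/existsP[x3 b3]|_]; last by lia.
    have h1 : bmul (bcompl f) (bcompl b) != bconst m.+1 false.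
      case: f1 => z fz; apply/neq0P; exists z; rewrite bmulE !bcomplE fz /=.
      by have := NB z; move: fz; case: (f z); case: (b z).
    have h2 : bcompl b != bconst m.+1 true by apply/neq1P; exists x3; rewrite bcomplE negbK.
    have eq : bmul (bcompl f) (bcompl b) = bcompl f.
      apply/ffunP => z; rewrite bmulE !bcomplE; have := NB z.
      by case: (f z); case: (b z).
    by have := FAI_le h1 h2; rewrite eq !bdeg_compl; lia.
  have h1 : bmul (bcompl f) b != bconst m.+1 false.
    by apply/neq0P; exists x2; rewrite bmulE bcomplE.
  have h2 : b != bconst m.+1 true by apply/neq1P; exists x1.
  have dF : bdeg (bmul (bcompl f) b) <= bdeg FG.
    by apply: bdeg_R1 => z; rewrite bmulE bcomplE FGb.
  by have := FAI_le h1 h2; lia.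
have h1 : bmul f a != bconst m.+1 false by apply/neq0P; exists x0; rewrite bmulE.
have h2 : a != bconst m.+1 true by apply/neq1P; exists x1.
have dFa : bdeg (bmul f a) <= bdeg FG by apply: bdeg_R0 => z; rewrite bmulE FGa.
by have := FAI_le h1 h2; lia.
Qed.
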